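(* Let $K$ be a field of characteristic zero, $m\in K[x,y]$ irreducible over $K(x)$ with $n=\deg_y(m)$, and $A=K(x)[y]/\langle m\rangle$ equipped with the derivation $'$ extending $d/dx$. Let $V=(v_1,\dots,v_n)$ be a $K(x)$-vector space basis of $A$ and let $a\in K[x]\setminus\{0\}$ and $B\in K[x]^{n\times n}$ be such that $aV'=BV$. Let $u\in K[x]\setminus\{0\}$ and let $\phi_V:K[x]^n\to u^{-2}K[x]^n$ be the $K$-linear map $\phi_V(p)=\frac{1}{u^2}\big(aup'-au'p+upB\big)$ (with $p$ a row vector). Let $N_V$ be the $K$-subspace of $K[x]^n$ spanned by all $e_ix^j$ ($1\le i\le n$, $j\in\mathbb N$) that are not the leading term of any element of $\operatorname{im}(\phi_V)\cap K[x]^n$. If $\deg_x(B)\le\deg_x(a)-1$, then $N_V$ is a finite-dimensional $K$-vector space.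
   Context: $e_1,\dots,e_n$ is the standard basis of $K^n$. An element $p\in K[x]^n$ is viewed as a polynomial in $x$ with coefficients in $K^n$: if $p=p^{(r)}x^r+\dots+p^{(0)}$ with $p^{(i)}\in K^n$, $p^{(r)}\neq0$, then $\deg_x(p)=r$ and its leading term is $p^{(r)}x^r$; ''$e_ix^j$ is a leading term'' means it equals such a $p^{(r)}x^r$. Likewise $\deg_x(B)$ is the maximum degree of the entries of $B$. *)

(* Defs.v *)
From HB Require Import structures.
From mathcomp Require Import all_boot all_order all_algebra fraction qpoly.
Set Implicit Arguments.
Unset Strict Implicit.
Unset Printing Implicit Defensive.
Import Order.TTheory GRing.Theory Num.Theory.
Local Open Scope ring_scope.
Notation "x %:F" := (@FracField.tofrac _ x).

(* K(x) := {fraction {poly K}}.  K[x,y] := {poly {poly K}} : polynomials in y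
   whose coefficients are polynomials in x. *)
Notation Kx K := {fraction {poly K}}.

Definition mF (K : fieldType) (m : {poly {poly K}}) : {poly (Kx K)} :=
  map_poly (fun c : {poly K} => c%:F) m.

(* monic associate of m: generates the same ideal <m> of K(x)[y] *)
Definition mmonic (K : fieldType) (m : {poly {poly K}}) : {poly (Kx K)} :=
  (lead_coef (mF m))^-1 *: mF m.

Definition Aalg (K : fieldType) (m : {poly {poly K}}) := {poly %/ mmonic m}.

Definition is_ddx (K : fieldType) (D : Kx K -> Kx K) : Prop :=
  [/\ forall f g, D (f + g) = D f + D g,
      forall f g, D (f * g) = D f * g + f * D g
    & forall p : {poly K}, D p%:F = (p^`())%:F].

Definition is_derA (K : fieldType) (m : {poly {poly K}})
    (D : Kx K -> Kx K) (dA : Aalg m -> Aalg m) : Prop :=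
  [/\ forall f g, dA (f + g) = dA f + dA g,
      forall f g, dA (f * g) = dA f * g + f * dA g
    & forall c : Kx K, dA (c%:A) = (D c)%:A].

Definition phiV (K : fieldType) (n : nat) (a u : {poly K})
    (B : 'M[{poly K}]_n) (p : 'rV[{poly K}]_n) : 'rV[Kx K]_n :=
  ((u ^+ 2)%:F)^-1 *: map_mx (fun c : {poly K} => c%:F)
     ((a * u) *: map_mx (fun q : {poly K} => q^`()) p
      - (a * u^`()) *: p + u *: (p *m B)).

Definition degx (K : fieldType) (n : nat) (q : 'rV[{poly K}]_n) : nat :=
  \max_(k < n) (size (q ord0 k)).-1.
Definition lcoefx (K : fieldType) (n : nat) (q : 'rV[{poly K}]_n) : 'rV[K]_n :=
  \row_k (q ord0 k)`_(degx q).

Definition monoe (K : fieldType) (n : nat) (i : 'I_n) (j : nat)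
  : 'rV[{poly K}]_n := \row_k (if k == i then 'X^j else 0).

Definition is_lead_term (K : fieldType) (n : nat) (q : 'rV[{poly K}]_n)
    (i : 'I_n) (j : nat) : Prop :=
  [/\ q != 0, degx q = j & lcoefx q = delta_mx ord0 i].

Definition im_phiV_pol (K : fieldType) (n : nat) (a u : {poly K})
    (B : 'M[{poly K}]_n) (q : 'rV[{poly K}]_n) : Prop :=
  exists p, phiV a u B p = map_mx (fun c : {poly K} => c%:F) q.

Definition Kspan (K : fieldType) (n : nat) (S : 'rV[{poly K}]_n -> Prop)
    (v : 'rV[{poly K}]_n) : Prop :=
  exists l : seq (K * 'rV[{poly K}]_n),
    (forall t, t \in l -> S t.2) /\ v = \sum_(t <- l) t.1%:P *: t.2.

Definition NV (K : fieldType) (n : nat) (a u : {poly K})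
    (B : 'M[{poly K}]_n) : 'rV[{poly K}]_n -> Prop :=
  Kspan (fun v => exists (i : 'I_n) (j : nat), v = @monoe K n i j /\
           ~ (exists q, im_phiV_pol a u B q /\ @is_lead_term K n q i j)).

Definition Kfindim (K : fieldType) (n : nat) (S : 'rV[{poly K}]_n -> Prop)
  : Prop :=
  exists s : seq 'rV[{poly K}]_n,
    (forall w, w \in s -> S w) /\ (forall v, S v <-> Kspan (fun w => w \in s) v).

(* Main.v *)
Require Import Defs.
From HB Require Import structures.
From mathcomp Require Import all_boot all_order all_algebra fraction qpoly.
From mathcomp Require Import zify ring.
From Stdlib Require Import Classical.
Import GRing.Theory.
Local Open Scope ring_scope.

Lemma nonroot_large (K : fieldType) (charK : [pchar K] =i pred0) (p : {poly K}) :
  p != 0 -> exists K0, forall k, (K0 <= k)%N -> ~~ root p k%:R.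
Proof.
have [s] := ubnP (size p); elim: s p => [|s IH] p sp p0; first by [].
case: (classic (exists k, root p k%:R)) => [[k0 rk0]|nr]; last first.
  by exists 0%N => k _; apply/negP => rk; apply: nr; exists k.
have [q pq] := factor_theorem _ _ rk0.
have q0 : q != 0 by apply: contraNneq p0 => q0; rewrite pq q0 mul0r.
have sq : (size q < s)%N.
  move: sp; rewrite pq size_mul ?polyXsubC_eq0 // size_XsubC.
  by rewrite addn2.
have [K1 HK1] := IH q sq q0.
exists (maxn K1 k0.+1) => k; rewrite geq_max => /andP[k1 k2].
rewrite pq rootM negb_or HK1 //= root_XsubC.
have -> : (k = (k - k0) + k0)%N by rewrite subnK // ltnW.
rewrite natrD -subr_eq0 addrK.
by move/pcharf0P: charK => ->; rewrite subn_eq0 -ltnNge.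
Qed.

Lemma filter_ex (T : eqType) (l : seq T) (P : T -> Prop) :
  exists s : seq T, forall x, x \in s <-> (x \in l /\ P x).
Proof.
elim: l => [|y l [s Hs]]; first by exists [::] => x; split => //; case.
case: (classic (P y)) => Py.
  exists (y :: s) => x; rewrite !inE; split.
    by case/orP => [/eqP -> | /Hs [-> ?]]; rewrite ?eqxx ?orbT.
  case=> /orP [/eqP -> | xl] Px; first by rewrite eqxx.
  by rewrite (proj2 (Hs x)) ?orbT.
exists s => x; rewrite inE; split.
  by move/Hs => [-> ?]; rewrite orbT.
case=> /orP [/eqP -> //| xl] Px; by apply/Hs.
Qed.
Lemma phi_img (K : fieldType) n (a u : {poly K}) (B : 'M[{poly K}]_n)
  (w : 'rV[{poly K}]_n) : u != 0 ->
  im_phiV_pol a u B (a *: map_mx (fun q : {poly K} => q^`()) w + w *m B).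
Proof.
move=> u0; exists (u *: w); rewrite /phiV; apply/rowP => l; rewrite !mxE.
set S1 := (\sum_j _ * _).
have -> : S1 = u * \sum_j w 0 j * B j l.
  by rewrite /S1 mulr_sumr; apply: eq_bigr => j _; rewrite !mxE mulrA.
rewrite derivM.
set s := \sum_j _.

have -> : a * u * (u^`() * w 0 l + u * (w 0 l)^`()) - a * u^`() * (u * w 0 l)
   + u * (u * s) = u ^+ 2 * (a * (w 0 l)^`() + s) by ring.
by rewrite [X in _ * X = _]rmorphM mulKf // tofrac_eq0 expf_neq0.
Qed.

Lemma lead_exists (K : fieldType) (charK : [pchar K] =i pred0) n
  (a u : {poly K}) (B : 'M[{poly K}]_n) (a0 : a != 0) (u0 : u != 0)
  (hdeg : forall i j, (size (B i j) < size a)%N) :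
  exists J, forall i j, (J <= j)%N ->
    exists q, im_phiV_pol a u B q /\ is_lead_term q i j.
Proof.
set d := (size a).-1.
have sa : size a = d.+1 by rewrite /d prednK // size_poly_gt0.
clearbody d.
have hdeg' : forall m l, (size (B m l) <= d)%N by move=> m l; rewrite -ltnS -sa hdeg.
set ad := lead_coef a.
have ad0 : ad != 0 by rewrite lead_coef_eq0.
set Bd := \matrix_(i, j) (B i j)`_(d.-1).
set A := - (ad^-1) *: Bd.
have [K0 HK0] := @nonroot_large _ charK _ (monic_neq0 (char_poly_monic A)).
exists (K0 + d)%N => i j hj.
have [k kdef] : {k : nat | k = (j - d).+1} by eexists.
have kp : k.-1 = (j - d)%N by rewrite kdef.
have kK : (K0 <= k)%N by lia.
set M := (k%:R * ad)%:M + Bd.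
have Mu : M \in unitmx.
  have -> : M = ad *: (k%:R%:M - A).
    rewrite /A scaleNr opprK scalerDr scalerA mulfV // scale1r scale_scalar_mx.
    by rewrite /M mulrC.
  rewrite unitmxE detZ unitfE mulf_neq0 ?expf_neq0 //.
  have := HK0 k kK; rewrite /root /char_poly -horner_evalE -det_map_mx.
  have -> // : map_mx (horner_eval k%:R) (char_poly_mx A) = k%:R%:M - A.
  apply/matrixP => x y; rewrite !mxE horner_evalE.
  by case: (x == y); rewrite /= ?mulr1n ?mulr0n ?hornerXsubC // hornerD hornerN hornerC horner0.
have [c cdef] : {c : 'rV[K]_n | c = delta_mx ord0 i *m invmx M} by eexists.
set w := \row_l (c 0 l *: 'X^k) : 'rV[{poly K}]_n.
set q := a *: map_mx (fun q : {poly K} => q^`()) w + w *m B.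
exists q; split; first exact: phi_img.
have coefq : forall l t, (q 0 l)`_t = c 0 l * k%:R * (a * 'X^(k.-1))`_t
    + \sum_m c 0 m * ('X^k * B m l)`_t.
  move=> l t; rewrite !mxE coefD coef_sum /= derivZ derivXn.
  congr (_ + _).
    by rewrite -scalerAr coefZ (mulrnAr a) coefMn mulr_natr mulrnAl mulrnAr.
  by apply: eq_bigr => m _; rewrite !mxE -scalerAl coefZ.
have h1 : forall l t, (j < t)%N -> (q 0 l)`_t = 0.
  move=> l t jt; rewrite coefq coefMXn ifF; last by apply/negbTE; rewrite -leqNgt; lia.
  rewrite nth_default ?mulr0 ?add0r; last by rewrite sa; lia.
  rewrite big1 // => m _; rewrite coefXnM; case: ifP => _; rewrite ?mulr0 //.
  by rewrite nth_default ?mulr0 //; move: (hdeg' m l); set z := size (B m l); move=> *; lia.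
have h2 : forall l, (q 0 l)`_j = (c *m M) 0 l.
  move=> l; rewrite coefq coefMXn ifF; last by apply/negbTE; rewrite -leqNgt; lia.
  have -> : (j - k.-1 = d)%N by lia.
  rewrite /M mulmxDr mul_mx_scalar !mxE.
  congr (_ + _); first by rewrite /ad lead_coefE sa /= [RHS]mulrC mulrA.
  apply: eq_bigr => m _; rewrite !mxE coefXnM.
  case: (posnP d) => [d0|dpos].
    have := hdeg m l; rewrite sa d0 ltnS leqn0 size_poly_eq0 => /eqP ->.
    by rewrite !coef0; case: ifP.
  by rewrite ifF; [congr (_ * _); congr (_`_ _); lia | apply/negbTE; rewrite -leqNgt; lia].
have cM : c *m M = delta_mx ord0 i by rewrite cdef mulmxKV.
have qj : forall l, (q 0 l)`_j = (delta_mx ord0 i : 'rV[K]_n) 0 l by move=> l; rewrite h2 cM.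
have qi : (q 0 i)`_j = 1 by rewrite qj mxE !eqxx.
have degq : degx q = j.
  apply/eqP; rewrite eqn_leq; apply/andP; split.
    apply/bigmax_leqP => l _.
    have /leq_sizeP : forall t, (j.+1 <= t)%N -> (q 0 l)`_t = 0 by move=> t; exact: h1.
    by rewrite -subn1 leq_subLR add1n.
  apply: leq_trans (leq_bigmax i).
  have : (j < size (q ord0 i))%N.
    rewrite ltnNge; apply/negP => h; move: qi; rewrite nth_default // => /eqP.
    by rewrite eq_sym oner_eq0.
  by move=> h; rewrite -ltnS (leq_trans h) // leqSpred.
split.
- apply/eqP => q0; move: qi; rewrite q0 mxE coef0 => /eqP; by rewrite eq_sym oner_eq0.
- by [].
- by rewrite /lcoefx degq; apply/rowP => l; rewrite mxE qj.
Qed.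

Theorem proposition14 (K : fieldType) (charK : [pchar K] =i pred0)
  (m : {poly {poly K}}) (m_irr : irreducible_poly (mF m))
  (D : Kx K -> Kx K) (hD : is_ddx D)
  (dA : Aalg m -> Aalg m) (hdA : is_derA D dA)
  (V : ((size (mF m)).-1).-tuple (Aalg m)) (hV : basis_of fullv V)
  (a : {poly K}) (a0 : a != 0) (B : 'M[{poly K}]_((size (mF m)).-1))
  (haB : forall i, (a%:F)%:A * dA (tnth V i)
                   = \sum_j ((B i j)%:F)%:A * tnth V j)
  (u : {poly K}) (u0 : u != 0)
  (hdeg : forall i j, (size (B i j) < size a)%N) :
  Kfindim (NV a u B).
Proof.
have [J HJ] := @lead_exists _ charK _ a u B a0 u0 hdeg.
set l := [seq @monoe K _ i j | i <- enum 'I_((size (mF m)).-1), j <- iota 0 J].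
have [s Hs] := @filter_ex _ l (fun v => exists i j, v = @monoe K _ i j /\
   ~ (exists q, im_phiV_pol a u B q /\ is_lead_term q i j)).
exists s; split.
  move=> w /Hs [_ Gw]; exists [:: (1, w)]; split.
    by move=> t; rewrite inE => /eqP -> /=.
  by rewrite big_cons big_nil scale1r addr0.
move=> v; split.
  case=> lst [Hl ->]; exists lst; split => // t /Hl Gt; apply/Hs; split => //.
  case: Gt => i [j [-> nl]]; apply: allpairs_f; first by rewrite mem_enum.
  rewrite mem_iota add0n /=.
  by case: (ltnP j J) => // /(HJ i) h; case: nl.
by case=> lst [Hl ->]; exists lst; split => // t /Hl /Hs [].
Qed.
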